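(* Let $(p(n))_{n\ge1}$ and $(q(n))_{n\ge1}$ be nonnegative sequences in $\ell^1$ and let $(g(n))_{n\ge1}$ be a real sequence. Suppose $p(1)\le g(1)$ and $$p(i)\le\sum_{j=1}^{i-1}q(i-j)p(j)+g(i)\qquad\text{for all } i\ge2 .$$ Define $q^{*1}=q$ and, for $k\ge2$, $q^{*k}(i)=\sum_{m=1}^{i-1}q^{*(k-1)}(m)\,q(i-m)$, and $Q(i)=\sum_{k=1}^\infty q^{*k}(i)$. Then $$p(i)\le\sum_{j=1}^{i-1}Q(i-j)g(j)+g(i)\qquad\text{for all } i\ge2 .$$ *)

(* Defs.v *)
(* real sequences nat -> R (index 0 unused), Coquelicot series. *)
From Stdlib Require Import Reals List.
From Coquelicot Require Import Coquelicot.
Open Scope R_scope.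

Definition sum_1_to (n : nat) (f : nat -> R) : R :=
  fold_right Rplus 0 (map f (seq 1 n)).

(* qstar q k = q^{*k} for k >= 1 (qstar q 0 is an unused dummy):
   q^{*1} = q,  q^{*k}(i) = sum_{m=1}^{i-1} q^{*(k-1)}(m) q(i-m). *)
Fixpoint qstar (q : nat -> R) (k : nat) (i : nat) : R :=
  match k with
  | O => 0
  | S k' =>
      match k' with
      | O => q i
      | S _ => sum_1_to (i - 1) (fun m => qstar q k' m * q (i - m)%nat)
      end
  end.

Definition Qsum (q : nat -> R) (i : nat) : R :=
  Series (fun k => qstar q (S k) i).

(* Main.v *)
Require Import Defs.
From Stdlib Require Import Reals List Lia Lra.
From Coquelicot Require Import Coquelicot.
Open Scope R_scope.

Lemma ser_fin (a : nat -> R) (N : nat) :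
  (forall k, (N < k)%nat -> a k = 0) -> Series a = sum_n a N.
Proof.
  intros H. apply is_series_unique.
  change (is_lim_seq (sum_n a) (sum_n a N)).
  apply is_lim_seq_ext_loc with (fun _ => sum_n a N).
  - exists N. intros n Hn. induction n as [|n IH].
    + assert (N = 0%nat) by lia. subst. reflexivity.
    + destruct (Nat.eq_dec N (S n)) as [->|Hne]; [reflexivity|].
      rewrite sum_Sn, <- IH by lia. rewrite H by lia. symmetry; exact (plus_zero_r (sum_n a N)).
  - apply is_lim_seq_const.
Qed.

Fixpoint sm (n : nat) (f : nat -> R) : R :=
  match n with O => 0 | S n' => sm n' f + f n' end.

Lemma sum_n_sm a N : sum_n a N = sm (S N) a.
Proof. induction N. rewrite sum_O. simpl. symmetry; apply Rplus_0_l. rewrite sum_Sn, IHN. reflexivity. Qed.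

Lemma sum_1_to_sm n f : sum_1_to n f = sm n (fun k => f (S k)).
Proof.
  unfold sum_1_to. induction n. reflexivity.
  rewrite seq_S, map_app, fold_right_app. simpl.
  rewrite <- IHn. clear IHn. replace (f (S n) + 0) with (f (S n)) by ring.
  generalize (f (S n)). induction (map f (seq 1 n)); intros; simpl. ring.
  rewrite IHl. ring.
Qed.

Lemma sm_ext n f g : (forall k, (k < n)%nat -> f k = g k) -> sm n f = sm n g.
Proof. induction n; intros H; simpl. reflexivity. rewrite IHn, H. reflexivity. lia. intros; apply H; lia. Qed.

Lemma sm_le n f g : (forall k, (k < n)%nat -> f k <= g k) -> sm n f <= sm n g.
Proof. induction n; intros H; simpl. lra. apply Rplus_le_compat. apply IHn; intros; apply H; lia. apply H; lia. Qed.

Lemma sm_plus n f g : sm n (fun k => f k + g k) = sm n f + sm n g.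
Proof. induction n; simpl. ring. rewrite IHn. ring. Qed.

Lemma sm_scal n c f : sm n (fun k => c * f k) = c * sm n f.
Proof. induction n; simpl. ring. rewrite IHn. ring. Qed.

Lemma sm_S_l n f : sm (S n) f = f 0%nat + sm n (fun k => f (S k)).
Proof. induction n; simpl in *. ring. rewrite IHn. ring. Qed.

Lemma sm_swap n m F : sm n (fun j => sm m (F j)) = sm m (fun l => sm n (fun j => F j l)).
Proof.
  induction n; simpl. induction m; simpl. ring. rewrite <- IHm. ring.
  rewrite IHn, <- sm_plus. reflexivity.
Qed.

Lemma sm_tri n F : sm n (fun j => sm j (F j)) = sm n (fun k => sm (n - S k) (fun t => F (S k + t)%nat k)).
Proof.
  induction n. reflexivity.
  change (sm (S n) ?f) with (sm n f + f n) at 1. rewrite IHn.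
  change (sm (S n) ?f) with (sm n f + f n). replace (S n - S n)%nat with 0%nat by lia. simpl sm at 3.
  cbv beta. replace (S n - S n)%nat with 0%nat by lia. simpl sm at 4. rewrite Rplus_0_r, <- sm_plus. apply sm_ext. intros k Hk.
  simpl. replace (n - k)%nat with (S (n - S k)) by lia. simpl sm. f_equal. f_equal. lia.
Qed.

Lemma qstar_van q k i : (2 <= k)%nat -> (i < k)%nat -> qstar q k i = 0.
Proof.
  revert i. induction k as [|k IH]; intros i Hk Hi. lia.
  destruct k as [|k]. lia.
  change (qstar q (S (S k)) i) with (sum_1_to (i - 1) (fun m => qstar q (S k) m * q (i - m)%nat)).
  rewrite sum_1_to_sm. destruct k as [|k].
  - replace (i-1)%nat with 0%nat by lia. reflexivity.
  - transitivity (sm (i-1) (fun _ => 0)).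
    + apply sm_ext. intros t Ht. rewrite IH by lia. ring.
    + clear. induction (i-1)%nat; simpl. reflexivity. rewrite IHn. ring.
Qed.

Definition QN q N n := sm (S N) (fun k => qstar q (S k) n).

Lemma Qsum_QN q N n : (1 <= n)%nat -> (n <= S N)%nat -> Qsum q n = QN q N n.
Proof.
  intros H1 H2. unfold Qsum, QN. rewrite (ser_fin _ N), sum_n_sm. reflexivity.
  intros k Hk. apply qstar_van; lia.
Qed.

Lemma QN_rec q N n : QN q (S N) n = q n + sum_1_to (n-1) (fun t => QN q N t * q (n - t)%nat).
Proof.
  unfold QN. rewrite sm_S_l. simpl qstar at 1. f_equal.
  rewrite sum_1_to_sm.
  transitivity (sm (S N) (fun k => sm (n-1) (fun t => qstar q (S k) (S t) * q (n - S t)%nat))).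
  - apply sm_ext. intros k _. change (qstar q (S (S k)) n) with
     (sum_1_to (n - 1) (fun m => qstar q (S k) m * q (n - m)%nat)). apply sum_1_to_sm.
  - rewrite sm_swap. apply sm_ext. intros t _. rewrite Rmult_comm, <- sm_scal.
    apply sm_ext. intros; ring.
Qed.

Lemma Qrec q m : (1 <= m)%nat ->
  Qsum q m = q m + sm (m-1) (fun t => q (m - 1 - t)%nat * Qsum q (S t)).
Proof.
  intros Hm. rewrite (Qsum_QN q m m) by lia.
  replace (QN q m m) with (QN q (S (m-1)) m) by (f_equal; lia).
  rewrite QN_rec, sum_1_to_sm. f_equal. apply sm_ext. intros t Ht.
  rewrite (Qsum_QN q (m-1) (S t)) by lia. rewrite Rmult_comm. f_equal. f_equal. lia.
Qed.

Theorem mainTheorem3 (p q g : nat -> R)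
  (hp0 : forall n, (1 <= n)%nat -> 0 <= p n)
  (hq0 : forall n, (1 <= n)%nat -> 0 <= q n)
  (hp1 : ex_series p) (hq1 : ex_series q)
  (hbase : p 1%nat <= g 1%nat)
  (hrec : forall i, (2 <= i)%nat ->
     p i <= sum_1_to (i - 1) (fun j => q (i - j)%nat * p j) + g i) :
  forall i, (2 <= i)%nat ->
     p i <= sum_1_to (i - 1) (fun j => Qsum q (i - j)%nat * g j) + g i.
Proof.
  assert (C : forall n, p (S n) <= sm n (fun l => Qsum q (n - l)%nat * g (S l)) + g (S n)).
  { intro n. induction n as [n IH] using (well_founded_induction Wf_nat.lt_wf).
    destruct n as [|n']. simpl. lra.
    set (n := S n') in *.
    eapply Rle_trans. apply hrec. unfold n; lia.
    replace (S n - 1)%nat with n by lia. rewrite sum_1_to_sm.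
    apply Rplus_le_compat_r.
    eapply Rle_trans.
    { apply sm_le. intros j Hj. replace (S n - S j)%nat with (n - j)%nat by lia.
      apply Rmult_le_compat_l. apply hq0. lia. apply (IH j Hj). }
    right.
    transitivity (sm n (fun j => sm j (fun l => q (n - j)%nat * Qsum q (j - l)%nat * g (S l)))
                  + sm n (fun j => q (n - j)%nat * g (S j))).
    { rewrite <- sm_plus. apply sm_ext. intros j _. rewrite Rmult_plus_distr_l, <- sm_scal.
      f_equal. apply sm_ext. intros; ring. }
    rewrite sm_tri, <- sm_plus. apply sm_ext. intros l Hl.
    rewrite (Qrec q (n - l)) by lia.
    rewrite Rmult_plus_distr_r, Rplus_comm. f_equal.
    replace (n - l - 1)%nat with (n - S l)%nat by lia. rewrite Rmult_comm, <- sm_scal. apply sm_ext. intros t Ht.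
    replace (S l + t - l)%nat with (S t) by lia.
    replace (n - (S l + t))%nat with (n - S l - t)%nat by lia. ring. }
  intros i Hi. destruct i as [|n]. lia.
  rewrite sum_1_to_sm. replace (S n - 1)%nat with n by lia.
  eapply Rle_trans. apply C. right. f_equal.
Qed.
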